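(* Let $f$ be smooth and bistable (there is $\alpha\in(0,1)$ with $f(0)=f(\alpha)=f(1)=0$, $f'(0),f'(1)<0<f'(\alpha)$, $f>0$ on $(-\infty,0)\cup(\alpha,1)$, $f<0$ on $(0,\alpha)\cup(1,\infty)$) and $\tau_m=1/\sup_{[0,1]}|f'|$. Set $\delta_+=-f'(1)>0$, $\delta_-=-f'(0)>0$ and $$\chi_0:=\tfrac12\min\{\delta_+,\delta_-\}>0.$$ For $\tau\in(0,\tau_m)$ let $c=c_\ast(\tau)$ be the speed of the traveling wave of $u_t=v_x+f(u)$, $\tau v_t=u_x-v$ connecting $(0,0)$ to $(1,0)$, and $b_\pm=1+\tau\delta_\pm$. Then for all $\tau\in(0,\tau_m)$, every $\xi\in\mathbb{R}$ and every $\lambda\in\mathbb{C}$ satisfying one of the dispersion relations $$\xi^2-ic\xi(b_\pm+2\tau\lambda)+(1-c^2\tau)(\tau\lambda^2+b_\pm\lambda+\delta_\pm)=0$$ satisfies $\mathrm{Re}\,\lambda<-\chi_0<0$.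
   Context: The roots $\lambda=\lambda^\pm_{1,2}(\xi)$ of the dispersion relations describe the algebraic curves on which the constant-coefficient limit systems at $x\to\pm\infty$ have purely imaginary spatial eigenvalues $i\xi$. *)

(* Defs.v *)
From Stdlib Require Import Reals.
From Coquelicot Require Import Coquelicot.
Open Scope R_scope.

Definition smooth (f : R -> R) : Prop :=
  forall (n : nat) (x : R), ex_derive_n f n x.

Definition bistable (f : R -> R) : Prop :=
  exists alpha : R, 0 < alpha < 1 /\
    f 0 = 0 /\ f alpha = 0 /\ f 1 = 0 /\
    Derive f 0 < 0 /\ Derive f 1 < 0 /\ 0 < Derive f alpha /\
    (forall x, x < 0 -> 0 < f x) /\
    (forall x, alpha < x < 1 -> 0 < f x) /\
    (forall x, 0 < x < alpha -> f x < 0) /\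
    (forall x, 1 < x -> f x < 0).

Definition sup_abs_deriv (f : R -> R) : R :=
  real (Lub_Rbar (fun y => exists x, 0 <= x <= 1 /\ y = Rabs (Derive f x))).

Definition tau_m (f : R -> R) : R := / sup_abs_deriv f.

Definition delta_plus (f : R -> R) : R := - Derive f 1.
Definition delta_minus (f : R -> R) : R := - Derive f 0.
Definition chi0 (f : R -> R) : R := / 2 * Rmin (delta_plus f) (delta_minus f).

(* (u,v)(x,t) = (U,V)(x - c t) is a traveling wave of
   u_t = v_x + f(u),  tau v_t = u_x - v
   connecting (0,0) (at -infinity) to (1,0) (at +infinity). *)
Definition traveling_wave (f : R -> R) (tau c : R) (U V : R -> R) : Prop :=
  (forall z, ex_derive U z) /\ (forall z, ex_derive V z) /\
  (forall z, - c * Derive U z = Derive V z + f (U z)) /\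
  (forall z, - c * tau * Derive V z = Derive U z - V z) /\
  is_lim U m_infty 0 /\ is_lim V m_infty 0 /\
  is_lim U p_infty 1 /\ is_lim V p_infty 0.

Definition wave_speed (f : R -> R) (tau c : R) : Prop :=
  exists U V : R -> R, traveling_wave f tau c U V.

Definition dispersion (tau c b delta xi : R) (lam : C) : C :=
  (RtoC (xi ^ 2) - Ci * RtoC (c * xi) * (RtoC b + RtoC (2 * tau) * lam)
   + RtoC (1 - c ^ 2 * tau) * (RtoC tau * lam * lam + RtoC b * lam + RtoC delta))%C.

(* Main.v *)
Require Import Defs.
From Stdlib Require Import Reals Lra Psatz.
From Coquelicot Require Import Coquelicot.
Open Scope R_scope.

Lemma disp_re (tau c b delta xi x y : R) :
  dispersion tau c b delta xi (x, y) = RtoC 0 ->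
  xi^2 + 2*c*xi*tau*y + (1 - c^2*tau)*(tau*(x^2-y^2) + b*x + delta) = 0 /\
  - c*xi*(b + 2*tau*x) + (1 - c^2*tau)*(2*tau*x*y + b*y) = 0.
Proof.
  intros H. split.
  - apply (f_equal fst) in H. unfold dispersion in H. simpl in H. rewrite <- H. ring.
  - apply (f_equal snd) in H. unfold dispersion in H. simpl in H. rewrite <- H. ring.
Qed.

Lemma disp_bound (tau c delta xi x y : R) :
  0 < tau -> 0 < delta -> tau * delta < 1 -> 1 - c^2*tau <> 0 ->
  dispersion tau c (1 + tau*delta) delta xi (x, y) = RtoC 0 ->
  x < - delta / 2.
Proof.
  intros Ht Hd Htd Ha H.
  destruct (disp_re _ _ _ _ _ _ _ H) as [Hr Hi].
  set (a := 1 - c^2*tau) in *.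
  set (b := 1 + tau*delta) in *.
  set (P := 2*a*tau*x + a*b).
  set (Q := 2*a*tau*y - 2*c*xi*tau).
  assert (E1 : P^2 - Q^2 = a^2*(1-tau*delta)^2 - 4*tau*xi^2).
  { assert (P^2 - Q^2 - 4*a*tau*(xi^2 + 2*c*xi*tau*y + a*(tau*(x^2-y^2) + b*x + delta))
       = a^2*(1-tau*delta)^2 - 4*tau*xi^2) as E.
    { unfold P, Q, b, a. ring. }
    rewrite Hr in E. lra. }
  assert (E2 : P*Q = 0).
  { assert (P*Q = 2*a*tau*(- c*xi*(b + 2*tau*x) + a*(2*tau*x*y + b*y))) as E
      by (unfold P, Q; ring).
    rewrite Hi in E. lra. }
  apply Rmult_integral in E2. destruct E2 as [E2|E2].
  - unfold P in E2.
    assert (2*tau*x + b = 0).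
    { apply (Rmult_eq_reg_l a); [|exact Ha]. lra. }
    unfold b in H0. nra.
  - rewrite E2 in E1.
    assert (HP : P^2 <= a^2*(1-tau*delta)^2) by nra.
    assert (HP2 : (2*tau*x + b)^2 <= (1-tau*delta)^2).
    { assert (P^2 = a^2 * (2*tau*x+b)^2) by (unfold P; ring).
      assert (0 < a^2) by (pose proof (Rsqr_pos_lt a Ha); unfold Rsqr in *; nra).
      nra. }
    unfold b in HP2.
    assert (Hs : 2*tau*x + (1+tau*delta) <= 1 - tau*delta).
    { destruct (Rle_or_lt (2*tau*x + (1+tau*delta)) (1 - tau*delta)) as [h|h]; [exact h|].
      exfalso. nra. }
    nra.
Qed.
Lemma cont_eps (g : R -> R) x : ex_derive g x ->
  forall e, 0 < e -> exists d, 0 < d /\ forall y, Rabs (y - x) < d -> Rabs (g y - g x) < e.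
Proof.
  intros Hd e He.
  assert (Hc : continuity_pt g x).
  { apply continuity_pt_filterlim. apply (ex_derive_continuous g x Hd). }
  rewrite continuity_pt_locally in Hc.
  destruct (Hc (mkposreal e He)) as [d Hd'].
  exists d. split; [apply cond_pos|].
  intros y Hy. apply (Hd' y). exact Hy.
Qed.

Lemma key (g dg : R -> R) (eps : R) : 0 < eps ->
  (forall z, is_derive g z (dg z)) ->
  (forall z, g z < eps -> 0 <= dg z) ->
  (forall eta, 0 < eta -> exists M, forall z, M < z -> g z < eta) ->
  forall z0, g z0 <= 0.
Proof.
  intros He Hd Hpos Hlim z0.
  destruct (Rle_or_lt (g z0) 0) as [h|h]; [exact h|exfalso].
  set (eta := Rmin (g z0) eps).
  assert (Heta : 0 < eta) by (unfold eta; apply Rmin_pos; lra).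
  assert (Hle1 : eta <= g z0) by apply Rmin_l.
  assert (Hle2 : eta <= eps) by apply Rmin_r.
  destruct (Hlim eta Heta) as [M0 HM0].
  set (M := Rmax M0 z0 + 1).
  assert (HM1 : M0 < M) by (unfold M; pose proof (Rmax_l M0 z0); lra).
  assert (HM2 : z0 < M) by (unfold M; pose proof (Rmax_r M0 z0); lra).
  assert (HgM : g M < eta) by (apply HM0; lra).
  set (S := fun z => z0 <= z <= M /\ eta <= g z).
  assert (Hb : bound S) by (exists M; intros z [Hz _]; lra).
  assert (Hne : exists x, S x) by (exists z0; split; lra).
  destruct (completeness S Hb Hne) as [w [Hub Hlub]].
  assert (Hw1 : z0 <= w) by (apply Hub; split; lra).
  assert (Hw2 : w <= M) by (apply Hlub; intros z [Hz _]; lra).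
  assert (Hgw : eta <= g w).
  { destruct (Rle_or_lt eta (g w)) as [h'|h']; [exact h'|exfalso].
    destruct (cont_eps g w (ex_intro _ _ (Hd w)) (eta - g w)) as [d [Hdp Hd']]; [lra|].
    assert (w <= w - d/2); [|lra].
    apply Hlub. intros s [Hs1 Hs2].
    destruct (Rle_or_lt s (w - d/2)) as [h2|h2]; [exact h2|exfalso].
    assert (s <= w) by (apply Hub; split; assumption).
    assert (Rabs (s - w) < d) by (rewrite Rabs_left1; lra).
    specialize (Hd' s H0). apply Rabs_def2 in Hd'. lra. }
  assert (HwM : w < M) by (destruct Hw2 as [h'|h']; [exact h'| subst; lra]).
  destruct (MVT_cor2 g dg w M HwM) as [th [Hth1 Hth2]].
  { intros c _. apply is_derive_Reals. apply Hd. }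
  assert (Hgth : g th < eta).
  { destruct (Rle_or_lt eta (g th)) as [h'|h']; [exfalso|exact h'].
    assert (th <= w) by (apply Hub; split; [split; lra| exact h']). lra. }
  assert (0 <= dg th) by (apply Hpos; lra).
  nra.
Qed.
Lemma sq_lt (x r : R) : 0 < r -> x^2 < r^2 -> -r < x < r.
Proof. intros. split; nra. Qed.

Lemma lim_sq (h : R -> R) (l : R) :
  (forall e : posreal, exists M, forall z, M < z -> Rabs (h z - l) < e) ->
  forall eta, 0 < eta -> exists M, forall z, M < z -> (h z - l)^2 < eta.
Proof.
  intros H eta He.
  destruct (H (mkposreal (sqrt eta) (sqrt_lt_R0 _ He))) as [M HM].
  exists M. intros z Hz. specialize (HM z Hz). simpl in HM.
  pose proof (sqrt_sqrt eta (Rlt_le _ _ He)).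
  pose proof (Rabs_pos (h z - l)).
  assert ((h z - l)^2 = Rabs (h z - l) * Rabs (h z - l)).
  { rewrite <- pow2_abs. ring. }
  nra.
Qed.

Lemma no_wave f tau c U V : smooth f -> bistable f -> 0 < tau -> c^2*tau = 1 ->
  traveling_wave f tau c U V -> False.
Proof.
  intros Hs [alpha [Hal [F0 [Fa [F1 [D0 [D1 [Da [Fneg [Fmid [Fsm Fbig]]]]]]]]]]] Ht Hc
    [HU [HV [E1 [E2 [Lm1 [Lm2 [Lp1 Lp2]]]]]]].
  assert (Hfd : forall x, ex_derive f x) by (intro x; exact (Hs 1%nat x)).
  assert (Hf2 : forall x, ex_derive (Derive f) x) by (intro x; exact (Hs 2%nat x)).
  assert (Hc0 : c <> 0) by (intro h; subst; lra).
  assert (HVe : forall z, c * V z = - f (U z)).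
  { intro z. specialize (E1 z). specialize (E2 z).
    assert (c * V z = c * Derive U z + c^2*tau * Derive V z) by nra.
    rewrite Hc in H. lra. }
  assert (HDV : forall z, c * Derive V z = - (Derive U z * Derive f (U z))).
  { intro z.
    assert (Veq : forall t, V t = (- / c) * f (U t)).
    { intro t. apply (Rmult_eq_reg_l c); [|exact Hc0]. rewrite HVe. field. exact Hc0. }
    rewrite (Derive_ext _ _ z Veq).
    rewrite (is_derive_unique _ z ((- / c) * (Derive U z * Derive f (U z)))).
    - field. exact Hc0.
    - apply is_derive_scal.
      apply (is_derive_comp f U z (Derive f (U z)) (Derive U z)).
      + apply Derive_correct. apply Hfd.
      + apply Derive_correct. apply HU. }
  assert (K : forall z, Derive U z * (1 - tau * Derive f (U z)) = - c * tau * f (U z)).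
  { intro z. specialize (E2 z). specialize (HDV z). specialize (HVe z).
    assert (V z = - c * tau * f (U z)).
    { assert (V z = c^2*tau * V z) by (rewrite Hc; ring). rewrite H. simpl.
      replace (c * (c * 1) * tau * V z) with (c * tau * (c * V z)) by ring.
      rewrite HVe. ring. }
    assert (- c * tau * Derive V z = - tau * (c * Derive V z)) by ring.
    rewrite HDV in H0. nra. }
  destruct (Rtotal_order c 0) as [Hneg|[Hz|Hposc]]; [| contradiction |].
  - (* c < 0 : near 0 at -infinity *)
    destruct (cont_eps (Derive f) 0 (Hf2 0) (- Derive f 0)) as [d [Hd Hd']]; [lra|].
    set (r := Rmin d alpha).
    assert (Hr : 0 < r) by (unfold r; apply Rmin_pos; lra).
    assert (Hr1 : r <= d) by apply Rmin_l.
    assert (Hr2 : r <= alpha) by apply Rmin_r.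
    assert (G := key (fun z => (U (-z))^2) (fun z => -(2*U (-z)*Derive U (-z))) (r^2)).
    assert (Hall : forall z, (U (-z))^2 <= 0).
    { apply G.
      - nra.
      - intro z. auto_derive; [apply HU|]. change (Derive (fun x : R => U x)) with (Derive U). ring.
      - intros z Hz. apply sq_lt in Hz; [|exact Hr].
        set (u := U (-z)) in *.
        assert (Hf' : Derive f u < 0).
        { assert (Rabs (u - 0) < d) by (apply Rabs_def1; lra).
          specialize (Hd' u H). apply Rabs_def2 in Hd'. lra. }
        assert (Huf : u * f u <= 0).
        { destruct (Rtotal_order u 0) as [h|[h|h]].
          - specialize (Fneg u h). nra.
          - rewrite h, F0. lra.
          - assert (f u < 0) by (apply Fsm; lra). nra. }
        specialize (K (-z)). fold u in K.
        assert (u * Derive U (-z) * (1 - tau * Derive f u) = - c * tau * (u * f u)).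
        { rewrite Rmult_assoc, K. ring. }
        assert (0 < 1 - tau * Derive f u) by nra.
        assert (u * Derive U (-z) <= 0).
        { destruct (Rle_or_lt (u * Derive U (-z)) 0) as [h|h]; [exact h|].
          assert (0 < - c * tau) by nra. nra. }
        lra.
      - intros eta He.
        apply is_lim_spec in Lm1. simpl in Lm1.
        assert (H0 : forall e : posreal, exists M, forall z, M < z -> Rabs (U (-z) - 0) < e).
        { intro e. destruct (Lm1 e) as [M HM]. exists (-M). intros z Hz. apply HM. lra. }
        destruct (lim_sq _ _ H0 eta He) as [M HM]. exists M. intros z Hz.
        specialize (HM z Hz). rewrite Rminus_0_r in HM. exact HM. }
    apply is_lim_spec in Lp1. simpl in Lp1.
    destruct (Lp1 (mkposreal (1/2) ltac:(lra))) as [M HM].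
    specialize (HM (M+1) ltac:(lra)). simpl in HM.
    specialize (Hall (-(M+1))). rewrite Ropp_involutive in Hall.
    assert (U (M+1) = 0) by nra. rewrite H in HM.
    rewrite Rabs_left in HM; lra.
  - (* c > 0 : near 1 at +infinity *)
    destruct (cont_eps (Derive f) 1 (Hf2 1) (- Derive f 1)) as [d [Hd Hd']]; [lra|].
    set (r := Rmin d (1 - alpha)).
    assert (Hr : 0 < r) by (unfold r; apply Rmin_pos; lra).
    assert (Hr1 : r <= d) by apply Rmin_l.
    assert (Hr2 : r <= 1 - alpha) by apply Rmin_r.
    assert (G := key (fun z => (U z - 1)^2) (fun z => 2*(U z - 1)*Derive U z) (r^2)).
    assert (Hall : forall z, (U z - 1)^2 <= 0).
    { apply G.
      - nra.
      - intro z. auto_derive; [apply HU|]. change (Derive (fun x : R => U x)) with (Derive U). ring.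
      - intros z Hz. apply sq_lt in Hz; [|exact Hr].
        set (u := U z) in *.
        assert (Hf' : Derive f u < 0).
        { assert (Rabs (u - 1) < d) by (apply Rabs_def1; lra).
          specialize (Hd' u H). apply Rabs_def2 in Hd'. lra. }
        assert (Huf : (u - 1) * f u <= 0).
        { destruct (Rtotal_order u 1) as [h|[h|h]].
          - assert (0 < f u) by (apply Fmid; lra). nra.
          - rewrite h, F1. lra.
          - specialize (Fbig u h). nra. }
        specialize (K z). fold u in K.
        assert ((u - 1) * Derive U z * (1 - tau * Derive f u) = - c * tau * ((u - 1) * f u)).
        { rewrite Rmult_assoc, K. ring. }
        assert (0 < 1 - tau * Derive f u) by nra.
        assert (0 <= (u - 1) * Derive U z).
        { destruct (Rle_or_lt 0 ((u - 1) * Derive U z)) as [h|h]; [exact h|].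
          assert (- c * tau < 0) by nra. nra. }
        lra.
      - intros eta He.
        apply is_lim_spec in Lp1. simpl in Lp1.
        assert (H0 : forall e : posreal, exists M, forall z, M < z -> Rabs (U z - 1) < e).
        { intro e. destruct (Lp1 e) as [M HM]. exists M. exact HM. }
        exact (lim_sq _ _ H0 eta He). }
    apply is_lim_spec in Lm1. simpl in Lm1.
    destruct (Lm1 (mkposreal (1/2) ltac:(lra))) as [M HM].
    specialize (HM (M-1) ltac:(lra)). simpl in HM.
    specialize (Hall (M-1)).
    assert (U (M-1) = 1) by nra. rewrite H in HM.
    rewrite Rabs_right in HM; lra.
Qed.

Lemma tau_delta (f : R -> R) tau x : 0 <= x <= 1 -> 0 < tau < tau_m f ->
  tau * Rabs (Derive f x) < 1.
Proof.
  intros Hx [Ht1 Ht2]. unfold tau_m, sup_abs_deriv in Ht2.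
  set (E := fun y => exists x, 0 <= x <= 1 /\ y = Rabs (Derive f x)) in *.
  destruct (Lub_Rbar_correct E) as [Hub _].
  assert (H := Hub (Rabs (Derive f x)) (ex_intro _ x (conj Hx eq_refl))).
  destruct (Lub_Rbar E) as [s| |] eqn:El; simpl in *.
  - pose proof (Rabs_pos (Derive f x)).
    assert (0 < s).
    { destruct (Rle_or_lt s 0) as [h|h]; [|exact h].
      exfalso. assert (s = 0 \/ s < 0) by lra. destruct H1.
      + subst. rewrite Rinv_0 in Ht2. lra.
      + assert (/ s < 0) by (apply Rinv_lt_0_compat; exact H1). lra. }
    assert (tau * s < 1).
    { apply (Rmult_lt_compat_r s) in Ht2; [|exact H1].
      rewrite Rinv_l in Ht2; lra. }
    nra.
  - rewrite Rinv_0 in Ht2. lra.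
  - contradiction.
Qed.

Theorem lemma3p12 (f : R -> R) :
  smooth f -> bistable f ->
  forall tau : R, 0 < tau < tau_m f ->
  forall c : R, wave_speed f tau c ->
  forall (xi : R) (lam : C),
    (dispersion tau c (1 + tau * delta_plus f) (delta_plus f) xi lam = RtoC 0 \/
     dispersion tau c (1 + tau * delta_minus f) (delta_minus f) xi lam = RtoC 0) ->
    Re lam < - chi0 f /\ - chi0 f < 0.
Proof.
  intros Hs Hb tau Ht c [U [V Hw]] xi [x y] Hd.
  pose proof Hb as [alpha [_ [_ [_ [_ [D0 [D1 _]]]]]]].
  assert (Hp : 0 < delta_plus f) by (unfold delta_plus; lra).
  assert (Hm : 0 < delta_minus f) by (unfold delta_minus; lra).
  assert (Tp : tau * delta_plus f < 1).
  { pose proof (tau_delta f tau 1 ltac:(lra) Ht). unfold delta_plus.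
    rewrite Rabs_left in H; lra. }
  assert (Tm : tau * delta_minus f < 1).
  { pose proof (tau_delta f tau 0 ltac:(lra) Ht). unfold delta_minus.
    rewrite Rabs_left in H; lra. }
  assert (Ha : 1 - c^2*tau <> 0).
  { intro h. apply (no_wave f tau c U V Hs Hb (proj1 Ht)); [lra|exact Hw]. }
  assert (Hcp : chi0 f <= delta_plus f / 2)
    by (unfold chi0; pose proof (Rmin_l (delta_plus f) (delta_minus f)); lra).
  assert (Hcm : chi0 f <= delta_minus f / 2)
    by (unfold chi0; pose proof (Rmin_r (delta_plus f) (delta_minus f)); lra).
  assert (Hc0 : 0 < chi0 f)
    by (unfold chi0; pose proof (Rmin_pos _ _ Hp Hm); lra).
  simpl. split; [|lra].
  destruct Hd as [Hd|Hd].
  - pose proof (disp_bound tau c _ xi x y (proj1 Ht) Hp Tp Ha Hd). lra.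
  - pose proof (disp_bound tau c _ xi x y (proj1 Ht) Hm Tm Ha Hd). lra.
Qed.
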